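(* Let $G$ be a reaction network with one-dimensional stoichiometric subspace, $c^*\in\mathbb R^{s-1}$ a total-constant vector, $g(\kappa;c;x_1)$ and $q(\kappa;x_1)$ as below. If for a rate-constant vector $\kappa^*\in\mathbb R^m_{>0}$, $G$ has a positive steady state $x^*$ in $\mathcal P_{c^*}$, then $\frac{\partial g}{\partial x_1}(\kappa^*;c^*;x_1^* )$ has the same sign as $\frac{\partial q}{\partial x_1}(\kappa^*;x_1^* )$, and $x^*$ is stable if and only if $\frac{\partial q}{\partial x_1}(\kappa^*;x_1^* )<0$.
   Context: A reaction network $G$ has species $X_1,\dots,X_s$ and $m$ reactions $\sum_{i}\alpha_{ij}X_i\to\sum_i\beta_{ij}X_i$, $\alpha_{ij},\beta_{ij}\in\mathbb Z_{\ge0}$, $(\alpha_{1j},\dots,\alpha_{sj})\neq(\beta_{1j},\dots,\beta_{sj})$. $\mathcal N$ has entries $\beta_{ij}-\alpha_{ij}$, $S=\mathrm{im}\,\mathcal N$. For $\kappa\in\mathbb R^m_{>0}$, $f(\kappa;x)=\mathcal N(\kappa_1\prod_i x_i^{\alpha_{i1}},\dots,\kappa_m\prod_i x_i^{\alpha_{im}})^\top$. Since $S$ is one-dimensional, species are labelled so that $\beta_{11}-\alpha_{11}\ne0$, and there are $\lambda_j\ne0$ ($\lambda_1=1$) with $\beta_{ij}-\alpha_{ij}=\lambda_j(\beta_{i1}-\alpha_{i1})$. For $c\in\mathbb R^{s-1}$, $\mathcal P_c=\{x\in\mathbb R^s_{\ge0}:(\beta_{i1}-\alpha_{i1})x_1-(\beta_{11}-\alpha_{11})x_i=c_{i-1},\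 i=2,\dots,s\}$. A steady state is $x\ge0$ with $f(\kappa;x)=0$; positive if $x>0$; nondegenerate if $\mathrm{Jac}_f(x)(S)=S$; stable if nondegenerate and all nonzero eigenvalues of $\mathrm{Jac}_f(x)$ have negative real parts. $g(\kappa;c;x_1)=(\beta_{11}-\alpha_{11})\sum_{j=1}^m\lambda_j\kappa_jx_1^{\alpha_{1j}}\prod_{k=2}^s\big(\frac{\beta_{k1}-\alpha_{k1}}{\beta_{11}-\alpha_{11}}x_1-\frac{c_{k-1}}{\beta_{11}-\alpha_{11}}\big)^{\alpha_{kj}}$. Notation for $c^*$: $A_1=1,B_1=0$, $A_i=\frac{\beta_{i1}-\alpha_{i1}}{\beta_{11}-\alpha_{11}}$, $B_i=-\frac{c^*_{i-1}}{\beta_{11}-\alpha_{11}}$ ($i\ge2$). $[i]=\{k:A_k\ne0,B_k/A_k=B_i/A_i\}$ if $A_i\ne0$, $[i]=\{k:A_k=0\}$ otherwise; species labelled so that $1,\dots,r$ represent the $r$ distinct classes. $\varphi_k=\min_j\sum_{i\in[k]}\alpha_{ij}$, $\gamma_{kj}=\sum_{i\in[k]}\alpha_{ij}-\varphi_k$. $\mathcal J=\{i:A_i\neq0\}$, $\mathcal H=\{k\in\{1,\dots,r\}\cap\mathcal J:\gamma_{k1},\dots,\gamma_{km}\text{ not all equal}\}$. $Y_i(x_1)=(A_ix_1+B_i)/|A_i|$ if $i\in\mathcal J$, $Y_i=1$ otherwise; $\mathcal C_j=\prod_{i\in\mathcal J}|A_i|^{\alpha_{ij}}\prod_{i\notin\mathcal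 J}B_i^{\alpha_{ij}}$; $q(\kappa;x_1)=(\beta_{11}-\alpha_{11})\sum_{j=1}^m\lambda_j\kappa_j\mathcal C_j\prod_{k\in\mathcal H}Y_k(x_1)^{\gamma_{kj}}$. *)

(* Defs.v *)
From HB Require Import structures.
From mathcomp Require Import all_boot all_order all_algebra.
From mathcomp Require Import all_classical all_reals all_analysis.
From mathcomp Require Import complex.

Set Implicit Arguments.
Unset Strict Implicit.
Unset Printing Implicit Defensive.

Import Order.TTheory GRing.Theory Num.Theory.
Local Open Scope ring_scope.
Local Open Scope classical_set_scope.

(* Conventions: there are s.+1 species, indexed by 'I_s.+1 (species X_1 of the
   paper is ord0, species X_i, i >= 2, is lift ord0 k for k : 'I_s), and m.+1
   reactions indexed by 'I_m.+1 (reaction 1 of the paper is ord0).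
   alpha i j, beta i j : nat are the stoichiometric coefficients.
   A total-constant vector c in R^(s-1) is c : 'I_s -> R, c k = c_{k+1}
   (indexing the species lift ord0 k). *)

Section ReactionNetwork.
Variables (R : realType) (s m : nat).
Variables (alpha beta : 'I_s.+1 -> 'I_m.+1 -> nat).

Definition stoich : 'M[R]_(s.+1, m.+1) :=
  \matrix_(i, j) ((beta i j)%:R - (alpha i j)%:R).

Definition stoich_space : set 'cV[R]_s.+1 :=
  [set v | exists w : 'cV[R]_m.+1, v = stoich *m w].

Definition fvec (kappa : 'I_m.+1 -> R) (x : 'I_s.+1 -> R) (i : 'I_s.+1) : R :=
  \sum_(j < m.+1) stoich i j * (kappa j * \prod_(l < s.+1) x l ^+ alpha l j).

Definition upd (x : 'I_s.+1 -> R) (k : 'I_s.+1) (t : R) : 'I_s.+1 -> R :=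
  fun l => if l == k then t else x l.

Definition jac (kappa : 'I_m.+1 -> R) (x : 'I_s.+1 -> R) : 'M[R]_s.+1 :=
  \matrix_(i, k) derive1 (fun t => fvec kappa (upd x k t) i) (x k).

Definition steady_state (kappa : 'I_m.+1 -> R) (x : 'I_s.+1 -> R) : Prop :=
  (forall i, 0 <= x i) /\ (forall i, fvec kappa x i = 0).

Definition positive (x : 'I_s.+1 -> R) : Prop := forall i, 0 < x i.

Definition nondegenerate (kappa : 'I_m.+1 -> R) (x : 'I_s.+1 -> R) : Prop :=
  [set jac kappa x *m v | v in stoich_space] = stoich_space.

Definition stable (kappa : 'I_m.+1 -> R) (x : 'I_s.+1 -> R) : Prop :=
  nondegenerate kappa x /\
  forall z : R[i],
    eigenvalue (map_mx (fun r : R => (r%:C)%C) (jac kappa x)) z ->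
    z != 0 -> Re z < 0.

Definition in_Pc (c : 'I_s -> R) (x : 'I_s.+1 -> R) : Prop :=
  (forall i, 0 <= x i) /\
  forall k : 'I_s,
    stoich (lift ord0 k) ord0 * x ord0 - stoich ord0 ord0 * x (lift ord0 k) = c k.

Definition gfun (lambda : 'I_m.+1 -> R) (kappa : 'I_m.+1 -> R) (c : 'I_s -> R)
  (x1 : R) : R :=
  stoich ord0 ord0 *
  \sum_(j < m.+1) lambda j * kappa j * x1 ^+ alpha ord0 j *
     \prod_(k < s) (stoich (lift ord0 k) ord0 / stoich ord0 ord0 * x1
                    - c k / stoich ord0 ord0) ^+ alpha (lift ord0 k) j.

Definition Acoef (i : 'I_s.+1) : R :=
  match unlift ord0 i with
  | None => 1
  | Some k => stoich (lift ord0 k) ord0 / stoich ord0 ord0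
  end.

Definition Bcoef (c : 'I_s -> R) (i : 'I_s.+1) : R :=
  match unlift ord0 i with
  | None => 0
  | Some k => - (c k / stoich ord0 ord0)
  end.

Definition cls (c : 'I_s -> R) (i k : 'I_s.+1) : bool :=
  if Acoef i != 0 then
    (Acoef k != 0) && (Bcoef c k / Acoef k == Bcoef c i / Acoef i)
  else Acoef k == 0.

Definition clsum (c : 'I_s -> R) (k : 'I_s.+1) (j : 'I_m.+1) : nat :=
  (\sum_(i < s.+1 | cls c k i) alpha i j)%N.

Definition phi (c : 'I_s -> R) (k : 'I_s.+1) : nat :=
  \big[minn/clsum c k ord0]_(j < m.+1) clsum c k j.

Definition gamma (c : 'I_s -> R) (k : 'I_s.+1) (j : 'I_m.+1) : nat :=
  (clsum c k j - phi c k)%N.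

Definition inJ (i : 'I_s.+1) : bool := Acoef i != 0.

Definition inH (c : 'I_s -> R) (r : nat) (k : 'I_s.+1) : bool :=
  [&& (k < r)%N, inJ k & [exists j, exists j', gamma c k j != gamma c k j']].

Definition Yfun (c : 'I_s -> R) (i : 'I_s.+1) (x1 : R) : R :=
  if inJ i then (Acoef i * x1 + Bcoef c i) / `|Acoef i| else 1.

Definition Ccoef (c : 'I_s -> R) (j : 'I_m.+1) : R :=
  (\prod_(i < s.+1 | inJ i) `|Acoef i| ^+ alpha i j) *
  (\prod_(i < s.+1 | ~~ inJ i) Bcoef c i ^+ alpha i j).

Definition qfun (lambda : 'I_m.+1 -> R) (c : 'I_s -> R) (r : nat)
  (kappa : 'I_m.+1 -> R) (x1 : R) : R :=
  stoich ord0 ord0 *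
  \sum_(j < m.+1) lambda j * kappa j * Ccoef c j *
     \prod_(k < s.+1 | inH c r k) Yfun c k x1 ^+ gamma c k j.

End ReactionNetwork.

(* Main.v *)
Require Import Defs.
From HB Require Import structures.
From mathcomp Require Import all_boot all_order all_algebra.
From mathcomp Require Import all_classical all_reals all_analysis.
From mathcomp Require Import complex.
From mathcomp Require Import ring lra.

Import Order.TTheory GRing.Theory Num.Theory.
Local Open Scope ring_scope.

Lemma logderiv_prod (R : fieldType) (I : Type) (r : seq I) (F : I -> {poly R}) t :
  (forall i, (F i).[t] != 0) ->
  (\prod_(i <- r) F i)^`().[t] =
  (\prod_(i <- r) F i).[t] * \sum_(i <- r) (F i)^`().[t] / (F i).[t].
Proof.
move=> nz; elim: r => [|a r IH]; first by rewrite !big_nil derivC !hornerE ?mulr0.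
rewrite !big_cons derivM !hornerE IH mulrDr.
have := nz a => na.
congr (_ + _).
  by field.
by rewrite mulrA.
Qed.

Lemma logderiv_prodX (R : fieldType) (I : Type) (r : seq I) (p : I -> {poly R})
  (n : I -> nat) t :
  (forall i, (p i).[t] != 0) ->
  (\prod_(i <- r) p i ^+ n i)^`().[t] =
  (\prod_(i <- r) p i ^+ n i).[t] * \sum_(i <- r) (n i)%:R * (p i)^`().[t] / (p i).[t].
Proof.
move=> nz; rewrite logderiv_prod => [|i]; last by rewrite horner_exp expf_neq0.
congr (_ * _); apply: eq_bigr => i _.
rewrite deriv_exp hornerMn hornerM !horner_exp.
have := nz i; case: (n i) => [|k] pn /=; first by rewrite mulr0n !mul0r.
have pk : (p i).[t] ^+ k != 0 by rewrite expf_neq0.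
rewrite exprS -mulr_natr; field.
by rewrite pk pn.
Qed.
Lemma ReC (R : realType) (k : R) : 'Re ((k%:C)%C : R[i]) = (k%:C)%C.
Proof.
apply/Creal_ReP; rewrite realE ler0c.
have := lecR k 0; rewrite rmorph0 => ->; exact: le_total.
Qed.

Lemma rank1_stable (R : realType) s m (alpha beta : 'I_s.+1 -> 'I_m.+1 -> nat)
  kappa x (v w : 'I_s.+1 -> R) (lambda : 'I_m.+1 -> R) :
  v ord0 != 0 -> lambda ord0 != 0 ->
  (forall i j, stoich R alpha beta i j = lambda j * v i) ->
  (forall i k, jac alpha beta kappa x i k = v i * w k) ->
  stable alpha beta kappa x <-> \sum_k v k * w k < 0.
Proof.
move=> v0 l0 HN HJ.
set D := \sum_k v k * w k.
pose V : 'cV[R]_s.+1 := \col_i v i.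
have HS : forall y, stoich_space (R:=R) alpha beta y <-> exists c, y = c *: V.
  move=> y; split.
  - case=> u ->; exists (\sum_j lambda j * u j 0); apply/matrixP => i k.
    rewrite !mxE mulr_suml; apply: eq_bigr => j _; rewrite HN (ord1 k) mulrAC.
    done.
  - case=> c ->; exists (\col_j (if j == ord0 then c / lambda ord0 else 0)).
    apply/matrixP => i k; rewrite !mxE (bigD1 ord0) //= big1 => [|j /negPf nj].
      by rewrite HN !mxE eqxx addr0; field.
    by rewrite HN !mxE nj mulr0.
have HJm : jac alpha beta kappa x = \matrix_(i, k) (v i * w k).
  by apply/matrixP => i k; rewrite HJ mxE.
have HJV : forall c, jac alpha beta kappa x *m (c *: V) = (c * D) *: V.
  move=> c; rewrite HJm; apply/matrixP => i k; rewrite !mxE /D mulr_sumr mulr_suml.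
  apply: eq_bigr => j _; rewrite !mxE; ring.
have Hnd : Defs.nondegenerate alpha beta kappa x <-> D != 0.
  split.
  - move=> H; apply/eqP => D0.
    have : stoich_space (R:=R) alpha beta V by apply/HS; exists 1; rewrite scale1r.
    rewrite -H => -[y /HS [c ->]]; rewrite HJV D0 mulr0 scale0r.
    move=> /matrixP /(_ ord0 ord0); rewrite !mxE => /esym/eqP; rewrite (negPf v0).
    done.
  - move=> Dn; rewrite /nondegenerate; apply/seteqP; split => y.
    + case=> u /HS [c ->] <-; rewrite HJV; apply/HS; by exists (c*D).
    + move/HS => [c ->]; exists ((c / D) *: V); first by apply/HS; exists (c/D).
      by rewrite HJV divfK.
split.
- case=> nd Heig; have Dn := (Hnd.1 nd).
  have : eigenvalue (map_mx (fun r : R => (r%:C)%C) (jac alpha beta kappa x)) (D%:C)%C.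
    apply/eigenvalueP; exists (\row_k (w k)%:C)%C.
      apply/rowP => k; rewrite !mxE /D rmorph_sum mulr_suml; apply: eq_bigr => i _.
      rewrite HJm !mxE /= !rmorphM /=; ring.
    apply/eqP => /rowP H0; suff D0 : D = 0 by rewrite D0 eqxx in Dn.
    rewrite /D big1 // => k _.
    by have := H0 k; rewrite !mxE => /(congr1 (@complex.Re R)) /= ->; rewrite mulr0.
  move=> /Heig H; have := H _; rewrite ReC ltcR; apply.
  by apply/eqP => /(congr1 (@complex.Re R)) /= D0; rewrite D0 eqxx in Dn.
- move=> Dlt; have Dn : D != 0 by rewrite ltr0_neq0.
  split; first by apply/Hnd.
  move=> z /eigenvalueP [u Hu un] zn.
  pose mu := \sum_i u 0 i * (v i)%:C%C.
  have Hk : forall k, mu * (w k)%:C%C = z * u 0 k.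
    move=> k; have := congr1 (fun M : 'rV[R[i]]_s.+1 => M 0 k) Hu; rewrite HJm /= !mxE => <-.
    rewrite /mu mulr_suml; apply: eq_bigr => i _; rewrite !mxE /= rmorphM /=; ring.
  have mun : mu != 0.
    apply: contraNneq un => mu0; apply/eqP/rowP => k; rewrite mxE.
    have := Hk k; rewrite mu0 mul0r => /esym /eqP; rewrite mulf_eq0 (negPf zn) /=.
    by move=> /eqP.
  have : z * mu = mu * D%:C%C.
    rewrite {1}/mu mulr_sumr /D rmorph_sum mulr_sumr; apply: eq_bigr => k _.
    rewrite mulrA -Hk rmorphM; ring.
  rewrite [RHS]mulrC => /(mulIf mun) ->.
  by rewrite ReC ltcR.
Qed.

Lemma cls_gen (R : fieldType) (aa ab ai ba bb bi : R) :
  (if aa != 0 then (ai != 0) && (bi / ai == ba / aa) else ai == 0) ->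
  (if ab != 0 then (ai != 0) && (bi / ai == bb / ab) else ai == 0) ->
  (if aa != 0 then (ab != 0) && (bb / ab == ba / aa) else ab == 0).
Proof.
case: (eqVneq aa 0) => [->|na]; case: (eqVneq ab 0) => [->|nb];
  case: (eqVneq ai 0) => [->|ni] //=; rewrite ?eqxx ?na ?nb ?ni //=.
by move=> /eqP <- /eqP <-.
Qed.

Lemma bigmin_le (I : eqType) (r : seq I) (x0 : nat) (F : I -> nat) j :
  j \in r -> (\big[minn/x0]_(i <- r) F i <= F j)%N.
Proof.
elim: r => // a r IH; rewrite inE big_cons => /orP [/eqP ->|/IH h].
  exact: geq_minl.
exact: leq_trans (geq_minr _ _) h.
Qed.

Theorem lemma5p9 (R : realType) (s m : nat)
  (alpha beta : 'I_s.+1 -> 'I_m.+1 -> nat)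
  (Hreac : forall j : 'I_m.+1, exists i : 'I_s.+1, alpha i j != beta i j)
  (Hdim : \rank (stoich R alpha beta) = 1%N)
  (H11 : stoich R alpha beta ord0 ord0 != 0)
  (lambda : 'I_m.+1 -> R)
  (Hlam1 : lambda ord0 = 1)
  (Hlamnz : forall j, lambda j != 0)
  (Hlam : forall i j, stoich R alpha beta i j = lambda j * stoich R alpha beta i ord0)
  (cstar : 'I_s -> R)
  (r : nat) (Hr : (r <= s.+1)%N)
  (Hrep_distinct : forall i k : 'I_s.+1, (i < r)%N -> (k < r)%N -> i != k ->
      ~~ cls alpha beta cstar i k)
  (Hrep_cover : forall k : 'I_s.+1, exists i : 'I_s.+1,
      (i < r)%N /\ cls alpha beta cstar i k)
  (kstar : 'I_m.+1 -> R) (Hk : forall j, 0 < kstar j)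
  (xstar : 'I_s.+1 -> R)
  (Hss : steady_state alpha beta kstar xstar)
  (Hpos : positive xstar)
  (HP : in_Pc alpha beta cstar xstar) :
  Num.sg (derive1 (gfun alpha beta lambda kstar cstar) (xstar ord0))
    = Num.sg (derive1 (qfun alpha beta lambda cstar r kstar) (xstar ord0))
  /\ (stable alpha beta kstar xstar <->
      derive1 (qfun alpha beta lambda cstar r kstar) (xstar ord0) < 0).
Proof.
pose A := Acoef R alpha beta.
pose B := Bcoef alpha beta cstar.
pose a := stoich R alpha beta ord0 ord0.
pose x1 := xstar ord0.
have HA0 : A ord0 = 1 by rewrite /A /Acoef unlift_none.
have HB0 : B ord0 = 0 by rewrite /B /Bcoef unlift_none.
have HAl : forall k, A (lift ord0 k) = stoich R alpha beta (lift ord0 k) ord0 / a.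
  by move=> k; rewrite /A /Acoef liftK.
have HBl : forall k, B (lift ord0 k) = - (cstar k / a).
  by move=> k; rewrite /B /Bcoef liftK.
have Hx : forall i, xstar i = A i * x1 + B i.
  move=> i; case: (unliftP ord0 i) => [k ->|->]; last by rewrite HA0 HB0 mul1r addr0.
  have := HP.2 k; rewrite HAl HBl => <-; rewrite /x1 -/a; field.
  exact: H11.
have HvA : forall i, stoich R alpha beta i ord0 = a * A i.
  move=> i; case: (unliftP ord0 i) => [k ->|->]; last by rewrite HA0 mulr1.
  rewrite HAl /a; field; exact: H11.
have xnz : forall i, xstar i != 0 by move=> i; rewrite gt_eqF ?Hpos.
have Hg : forall t, gfun alpha beta lambda kstar cstar t =
    a * \sum_j lambda j * kstar j * \prod_i (A i * t + B i) ^+ alpha i j.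
  move=> t; rewrite /gfun; congr (_ * _); apply: eq_bigr => j _.
  rewrite big_ord_recl [RHS]mulrA; congr (_ * _).
    by rewrite HA0 HB0 mul1r addr0.
  by apply: eq_bigr => k _; rewrite HAl HBl.
have Hg0 : gfun alpha beta lambda kstar cstar x1 = 0.
  have H0 := Hss.2 ord0; rewrite /fvec in H0.
  rewrite Hg -[RHS]H0 mulr_sumr; apply: eq_bigr => j _; rewrite Hlam -/a.
  rewrite (eq_bigr (fun i => xstar i ^+ alpha i j)) => [|i _]; last by rewrite Hx.
  ring.
pose M j := \prod_l xstar l ^+ alpha l j.
pose w k := \sum_j lambda j * kstar j * M j * ((alpha k j)%:R / xstar k).
have HJ : forall i k, jac alpha beta kstar xstar i k = stoich R alpha beta i ord0 * w k.
  move=> i k; rewrite /jac mxE.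
  pose p (l : 'I_s.+1) : {poly R} := if l == k then 'X else (xstar l)%:P.
  pose Fp := \sum_j (stoich R alpha beta i j * kstar j) *:
               \prod_l p l ^+ alpha l j.
  have pv : forall l, (p l).[xstar k] = xstar l.
    by move=> l; rewrite /p; case: eqP => [->|_]; rewrite ?hornerX ?hornerC.
  have -> : (fun t => fvec alpha beta kstar (upd xstar k t) i) = horner Fp.
    apply/funext => t; rewrite /fvec /Fp horner_sum; apply: eq_bigr => j _.
    rewrite hornerZ horner_prod -mulrA; congr (_ * (_ * _)); apply: eq_bigr => l _.
    by rewrite horner_exp /upd /p; case: eqP => _; rewrite ?hornerX ?hornerC.
  rewrite -derivE /Fp linear_sum horner_sum /w mulr_sumr; apply: eq_bigr => j _.
  rewrite linearZ /= hornerZ logderiv_prodX => [|l]; last by rewrite pv.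
  rewrite horner_prod (eq_bigr (fun l => xstar l ^+ alpha l j)) => [|l _]; last first.
    by rewrite horner_exp pv.
  have -> : \sum_(l0 < s.+1) (alpha l0 j)%:R * (p l0)^`().[xstar k] / (p l0).[xstar k]
      = (alpha k j)%:R / xstar k.
    rewrite (bigD1 k) //= big1 => [|l nlk]; last first.
      by rewrite /p (negPf nlk) derivC horner0 mulr0 mul0r.
    by rewrite pv /p eqxx derivX hornerC mulr1 addr0.
  rewrite -/(M j) Hlam; ring.
pose Lp (i : 'I_s.+1) : {poly R} := A i *: 'X + (B i)%:P.
have HLp : forall i t, (Lp i).[t] = A i * t + B i.
  by move=> i t; rewrite /Lp hornerD hornerZ hornerX hornerC.
have HLd : forall i, (Lp i)^`().[x1] = A i.
  by move=> i; rewrite /Lp derivD derivZ derivX derivC addr0 hornerZ hornerC mulr1.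
pose Gp := a *: \sum_j (lambda j * kstar j) *: \prod_i Lp i ^+ alpha i j.
have HGp : gfun alpha beta lambda kstar cstar = horner Gp.
  apply/funext => t; rewrite Hg /Gp hornerZ horner_sum; congr (_ * _).
  apply: eq_bigr => j _; rewrite hornerZ horner_prod; congr (_ * _).
  by apply: eq_bigr => i _; rewrite horner_exp HLp.
have HD : derive1 (gfun alpha beta lambda kstar cstar) x1 =
    \sum_k stoich R alpha beta k ord0 * w k.
  rewrite HGp -derivE /Gp linearZ /= hornerZ linear_sum horner_sum.
  under [RHS]eq_bigr => k _ do rewrite /w mulr_sumr.
  rewrite exchange_big /= mulr_sumr; apply: eq_bigr => j _.
  rewrite linearZ /= hornerZ logderiv_prodX => [|i]; last by rewrite HLp -Hx.
  rewrite horner_prod (eq_bigr (fun i => xstar i ^+ alpha i j)) => [|i _]; last first.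
    by rewrite horner_exp HLp -Hx.
  rewrite -/(M j) !mulr_sumr; apply: eq_bigr => i _.
  rewrite HLd HLp -Hx HvA; ring.
have Hst : stable alpha beta kstar xstar <->
    derive1 (gfun alpha beta lambda kstar cstar) x1 < 0.
  rewrite HD; apply: (@rank1_stable R s m alpha beta kstar xstar
     (fun i => stoich R alpha beta i ord0) w lambda) => //.
pose rep (i : 'I_s.+1) := odflt ord0 [pick k : 'I_s.+1 | (k < r)%N && cls alpha beta cstar k i].
have Hrep : forall i, ((rep i < r)%N) && cls alpha beta cstar (rep i) i.
  move=> i; rewrite /rep; case: pickP => [k //|H0] /=.
  by have [k [kr ck]] := Hrep_cover i; have := H0 k; rewrite kr ck.
have clsT : forall p k i : 'I_s.+1, cls alpha beta cstar p i -> cls alpha beta cstar k i ->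
    cls alpha beta cstar p k.
  by move=> p k i; rewrite /cls; exact: cls_gen.
have rep_uniq : forall i k : 'I_s.+1, (k < r)%N -> cls alpha beta cstar k i -> rep i = k.
  move=> i k kr cki; have /andP [rr cr] := Hrep i; apply/eqP.
  by apply: contraTT (clsT _ _ _ cr cki) => ne; exact: Hrep_distinct.
have clsJ : forall k i : 'I_s.+1, cls alpha beta cstar k i ->
    inJ R alpha beta k = inJ R alpha beta i.
  move=> k i; rewrite /cls /inJ.
  case: (eqVneq (Acoef R alpha beta k) 0) => [->|nk] /=.
    by move=> /eqP ->; rewrite eqxx.
  by move=> /andP [-> _].
pose Yp (k : 'I_s.+1) : {poly R} := if inJ R alpha beta k
  then (A k / `|A k|) *: 'X + (B k / `|A k|)%:P else 1.
have HL : forall i t, inJ R alpha beta i -> A i * t + B i = `|A i| * (Yp (rep i)).[t].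
  move=> i t Ji; have /andP [kr cki] := Hrep i; set k := rep i in kr cki *.
  have Jk : inJ R alpha beta k by rewrite (clsJ _ _ cki).
  have Ai : A i != 0 := Ji.
  have Ak : A k != 0 := Jk.
  have eb : B i / A i = B k / A k.
    by move: cki; rewrite /cls -/A -/B Ak /= => /andP [_ /eqP].
  rewrite /Yp Jk hornerD hornerZ hornerX hornerC.
  have eB : B i = A i * (B k / A k) by rewrite -eb; field.
  have xi : xstar i = A i * (x1 + B k / A k) by rewrite Hx eB; ring.
  have xk : xstar k = A k * (x1 + B k / A k) by rewrite Hx; field.
  have nb : x1 + B k / A k != 0.
    by apply: contraNneq (xnz k) => e; rewrite xk e mulr0.
  have rpos : 0 < A i / A k.
    have -> : A i / A k = xstar i / xstar k by rewrite xi xk; field; rewrite Ak mulrC -Hx xnz.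
    by rewrite divr_gt0 ?Hpos.
  have eA : `|A i| = A i / A k * `|A k|.
    by rewrite -{1}(divfK Ak (A i)) normrM (gtr0_norm rpos).
  have nAk : `|A k| != 0 by rewrite normr_eq0.
  rewrite eA eB; field; by rewrite nAk Ak.
have phi_le : forall k j, (phi alpha beta cstar k <= clsum alpha beta cstar k j)%N.
  by move=> k j; rewrite /phi; apply: bigmin_le; exact: mem_index_enum.
have phi_ex : forall k, exists j0, phi alpha beta cstar k = clsum alpha beta cstar k j0.
  move=> k; rewrite /phi.
  apply: (big_ind (fun y => exists j0, y = clsum alpha beta cstar k j0)).
  - by exists ord0.
  - move=> y1 y2 [j1 ->] [j2 ->].
    case: (leqP (clsum alpha beta cstar k j1) (clsum alpha beta cstar k j2)) => h.
      by exists j1.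
    by exists j2.
  - by move=> j _; exists j.
have gam0 : forall k j, ~~ [exists j, exists j', gamma alpha beta cstar k j
      != gamma alpha beta cstar k j'] -> gamma alpha beta cstar k j = 0%N.
  move=> k j H; have [j0 e] := phi_ex k.
  have g0 : gamma alpha beta cstar k j0 = 0%N by rewrite /gamma e subnn.
  apply/eqP; apply: contraNT H => nz.
  by apply/existsP; exists j; apply/existsP; exists j0; rewrite g0.
have clsD : forall k j, clsum alpha beta cstar k j =
    (phi alpha beta cstar k + gamma alpha beta cstar k j)%N.
  by move=> k j; rewrite /gamma subnKC.
have Hprod : forall j t, \prod_i (A i * t + B i) ^+ alpha i j =
    Ccoef alpha beta cstar j * \prod_(k : 'I_s.+1 | (k < r)%N && inJ R alpha beta k)
       (Yp k).[t] ^+ clsum alpha beta cstar k j.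
  move=> j t.
  have E1 : \prod_(i | ~~ inJ R alpha beta i) (A i * t + B i) ^+ alpha i j =
      \prod_(i | ~~ inJ R alpha beta i) B i ^+ alpha i j.
    apply: eq_bigr => i /negbNE /eqP Ai0; have Ai0' : A i = 0 := Ai0.
    by rewrite Ai0' mul0r add0r.
  have E2 : \prod_(i | inJ R alpha beta i) (A i * t + B i) ^+ alpha i j =
      (\prod_(i | inJ R alpha beta i) `|A i| ^+ alpha i j) *
      \prod_(i | inJ R alpha beta i) (Yp (rep i)).[t] ^+ alpha i j.
    by rewrite -big_split; apply: eq_bigr => i Ji /=; rewrite HL // exprMn.
  have E3 : \prod_(i | inJ R alpha beta i) (Yp (rep i)).[t] ^+ alpha i j =
      \prod_(k : 'I_s.+1 | (k < r)%N && inJ R alpha beta k)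
       (Yp k).[t] ^+ clsum alpha beta cstar k j.
    rewrite (partition_big rep (fun k : 'I_s.+1 => (k < r)%N && inJ R alpha beta k)) /=; last first.
      by move=> i Ji; have /andP [rr cr] := Hrep i; rewrite rr (clsJ _ _ cr).
    apply: eq_bigr => k /andP [kr Jk].
    rewrite (eq_bigr (fun i => (Yp k).[t] ^+ alpha i j)) => [|i /andP [_ /eqP ->]] //.
    rewrite prodrXr /clsum; congr (_ ^+ _); apply: eq_bigl => i.
    apply/idP/idP => [/andP [_ /eqP <-]|cki]; first by have /andP [_ ->] := Hrep i.
    by rewrite -(clsJ _ _ cki) Jk (rep_uniq _ _ kr cki) eqxx.
  rewrite (bigID (inJ R alpha beta)) /= E1 E2 E3 /Ccoef -/A -/B; ring.
have HYp : forall k t, Yfun alpha beta cstar k t = (Yp k).[t].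
  move=> k t; rewrite /Yfun /Yp; case: ifP => _; rewrite ?hornerC //.
  by rewrite hornerD hornerZ hornerX hornerC -/A -/B mulrDl mulrAC.
have hx : forall (P : pred 'I_s.+1) (n : 'I_s.+1 -> nat) t,
    (\prod_(k | P k) Yp k ^+ n k).[t] = \prod_(k | P k) (Yp k).[t] ^+ n k.
  by move=> P n t; rewrite horner_prod; apply: eq_bigr => k _; rewrite horner_exp.
pose Pp := \prod_(k : 'I_s.+1 | (k < r)%N && inJ R alpha beta k)
   Yp k ^+ phi alpha beta cstar k.
pose Qp := a *: \sum_j (lambda j * kstar j * Ccoef alpha beta cstar j) *:
   \prod_(k | inH alpha beta cstar r k) Yp k ^+ gamma alpha beta cstar k j.
have HQ : qfun alpha beta lambda cstar r kstar = horner Qp.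
  apply/funext => t; rewrite /qfun /Qp hornerZ horner_sum; congr (_ * _).
  apply: eq_bigr => j _; rewrite hornerZ hx; congr (_ * _).
  by apply: eq_bigr => k _; rewrite HYp.
have HGPQ : forall t, gfun alpha beta lambda kstar cstar t = Pp.[t] * Qp.[t].
  move=> t; rewrite Hg /Qp hornerZ mulrCA; congr (_ * _).
  rewrite horner_sum mulr_sumr; apply: eq_bigr => j _.
  rewrite hornerZ hx Hprod /Pp hx.
  rewrite (eq_bigr (fun k => (Yp k).[t] ^+ phi alpha beta cstar k *
      (Yp k).[t] ^+ gamma alpha beta cstar k j)) => [|k _]; last by rewrite -exprD -clsD.
  rewrite big_split /=.
  have EH : \prod_(k : 'I_s.+1 | (k < r)%N && inJ R alpha beta k)
        (Yp k).[t] ^+ gamma alpha beta cstar k j =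
      \prod_(k | inH alpha beta cstar r k) (Yp k).[t] ^+ gamma alpha beta cstar k j.
    rewrite (bigID (fun k => [exists j, exists j', gamma alpha beta cstar k j
        != gamma alpha beta cstar k j'])) /=.
    rewrite [X in _ * X]big1 ?mulr1 => [|k /andP [_ ng]]; last by rewrite gam0 ?expr0.
    by apply: eq_bigl => k; rewrite /inH andbA.
  rewrite EH; ring.
have Ppos : 0 < Pp.[x1].
  rewrite /Pp horner_prod; apply: prodr_gt0 => k /andP [_ Jk].
  rewrite horner_exp exprn_gt0 // -HYp /Yfun Jk -/A -/B -Hx divr_gt0 ?Hpos //.
  by rewrite normr_gt0.
have HGfun : gfun alpha beta lambda kstar cstar = horner (Pp * Qp).
  by apply/funext => t; rewrite HGPQ hornerM.
have Q0 : Qp.[x1] = 0.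
  by have := Hg0; rewrite HGPQ => /eqP; rewrite mulf_eq0 gt_eqF //= => /eqP.
have Hdg : derive1 (gfun alpha beta lambda kstar cstar) x1 =
    Pp.[x1] * derive1 (qfun alpha beta lambda cstar r kstar) x1.
  by rewrite HGfun HQ -!derivE derivM hornerD !hornerM Q0 mulr0 add0r.
rewrite -/x1; split.
  by rewrite Hdg sgrM gtr0_sg // mul1r.
by rewrite Hst Hdg pmulr_rlt0.
Qed.
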